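(* For the private information delivery problem with $K$ messages, $N \geq \lceil \frac{K}{M} \rceil$ servers and $M$ messages per server, the capacity satisfies \[ 1/\lceil \tfrac{K}{M} \rceil \leq C \leq M/K. \]
   Context: Private information delivery (PID) problem: there are $K$ independent messages $W_1,\dots,W_K$, each consisting of $L$ i.i.d. uniform symbols from a finite field $\mathbb{F}_p$ (so $H(W_k)=L$ in $p$-ary units and the messages are mutually independent). There are $N$ servers; server $n$ stores $S_n = W_{\mathcal{S}_n}$ with $\mathcal{S}_n \subset [1:K]$, $|\mathcal{S}_n| = M$ (replicated storage, no coding or splitting of messages; the choice of the sets $\mathcal{S}_n$ may be designed). The servers share a common random variable $Z$ independent of the messages (any amount of common randomness is allowed). The servers privately choose $\theta \in [1:K]$ and wish to deliver $W_\theta$ to a user without revealing $\theta$. To deliver $W_k$, server $n$ sends an answer $A_n^{[k]}$ that is a deterministic function of $(S_n, Z)$. Correctness: $H(W_k \mid A_1^{[k]},\dots,A_N^{[k]}) = 0$ (zero-error decoding). Privacy: for all $k \in [1:K]$, $(A_1^{[1]},\dots,A_N^{[1]}, W_1) \sim (A_1^{[k]},\dots,A_N^{[k]}, W_k)$ (identically distributed). If $D_n$ is the number of symbols sent by server $n$, the rate is $R = L/\sum_{n=1}^N D_n$. A rate is achievable if there is a PID scheme of rate at least that value with zero-error decoding, and the capacity $C$ is the supremum of achievable rates over all storage designs $S_1,\dots,S_N$ and all PID schemes. *)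

(* Defs.v *)
From HB Require Import structures.
From mathcomp Require Import all_boot all_order all_algebra.
From mathcomp Require Import boolp classical_sets reals.
Set Implicit Arguments. Unset Strict Implicit. Unset Printing Implicit Defensive.
Import Order.TTheory GRing.Theory Num.Theory.
Local Open Scope ring_scope.
Local Open Scope classical_set_scope.

(* ceil(K / M) for M > 0 *)
Definition ceildiv (K M : nat) : nat := ((K + M).-1 %/ M)%N.

Definition msgs (p K L : nat) := {ffun 'I_K -> 'rV['F_p]_L}.

(* A PID scheme of the given parameters:
   S n  : set of indices of the messages stored by server n (|S n| = M)
   ZT,PZ: common randomness Z with distribution PZ on the finite set ZT
   D n  : number of F_p-symbols sent by server n
   ans k n W z : answer A_n^[k] of server n for delivering W_k, when the
                 messages are W and the common randomness is z. *)
Definition is_PID_scheme (R : realType) (p K N M L : nat)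
  (S : 'I_N -> {set 'I_K}) (ZT : finType) (PZ : ZT -> R) (D : 'I_N -> nat)
  (ans : forall (k : 'I_K) (n : 'I_N), msgs p K L -> ZT -> 'rV['F_p]_(D n)) :
  Prop :=
  (forall n, #|S n| = M) /\
  (* Z is a random variable with distribution PZ, independent of W
     (the joint law is PZ z * uniform(W), see [joint_prob]) *)
  (forall z, 0 <= PZ z) /\ (\sum_z PZ z = 1) /\
  (* A_n^[k] is a deterministic function of (S_n, Z) *)
  (forall k n (W W' : msgs p K L) z,
      (forall j, j \in S n -> W j = W' j) -> ans k n W z = ans k n W' z) /\
  (* correctness: zero-error decoding, i.e. W_k is a function of
     (A_1^[k],...,A_N^[k]) on the support of (W, Z); all W have positive
     probability (uniform messages) *)
  (forall k, exists dec : (forall n : 'I_N, 'rV['F_p]_(D n)) -> 'rV['F_p]_L,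
      forall (W : msgs p K L) z, 0 < PZ z -> dec (fun n => ans k n W z) = W k) /\
  (* privacy: (A_1^[k],...,A_N^[k], W_k) has the same distribution for all k *)
  (forall (k k' : 'I_K) (a : forall n : 'I_N, 'rV['F_p]_(D n)) (w : 'rV['F_p]_L),
      \sum_(W : msgs p K L) \sum_(z : ZT)
         (PZ z / (p ^ (K * L))%:R) *
           ([forall n, ans k n W z == a n] && (W k == w))%:R
    = \sum_(W : msgs p K L) \sum_(z : ZT)
         (PZ z / (p ^ (K * L))%:R) *
           ([forall n, ans k' n W z == a n] && (W k' == w))%:R).

Definition PID_achievable (R : realType) (p K N M : nat) (r : R) : Prop :=
  exists (L : nat) (S : 'I_N -> {set 'I_K}) (ZT : finType) (PZ : ZT -> R)
         (D : 'I_N -> nat)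
         (ans : forall (k : 'I_K) (n : 'I_N), msgs p K L -> ZT -> 'rV['F_p]_(D n)),
    (0 < L)%N /\ @is_PID_scheme R p K N M L S ZT PZ D ans /\
    r <= (L%:R / (\sum_n D n)%:R).

Definition PID_capacity (R : realType) (p K N M : nat) : R :=
  sup [set r : R | PID_achievable p K N M r].

(* Main.v *)
Require Import Defs.
From HB Require Import structures.
From mathcomp Require Import all_boot all_order all_algebra.
From mathcomp Require Import boolp classical_sets reals.
From mathcomp Require Import perm zify ring.
Set Implicit Arguments. Unset Strict Implicit. Unset Printing Implicit Defensive.
Import Order.TTheory GRing.Theory Num.Theory.
Local Open Scope ring_scope.

Section Conv.
Variables (R : realType) (p K N M L : nat) (S : 'I_N -> {set 'I_K}) (ZT : finType)
  (PZ : ZT -> R) (D : 'I_N -> nat)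
  (ans : forall (k : 'I_K) (n : 'I_N), msgs p K L -> ZT -> 'rV['F_p]_(D n)).
Hypothesis pp : prime p.
Hypothesis H : @is_PID_scheme R p K N M L S ZT PZ D ans.

Definition supp (k : 'I_K) (n : 'I_N) : {set 'rV['F_p]_(D n)} :=
  [set a | [exists W, [exists z, (0 < PZ z) && (ans k n W z == a)]]].

Lemma supp_sub k k' n : supp k n \subset supp k' n.
Proof.
case: H => _ [PZ0 [_ [_ [_ priv]]]].
apply/fintype.subsetP => a; rewrite !inE => /existsP [W /existsP [z /andP [Pz /eqP Ha]]].
have := priv k k' (fun m => ans k m W z) (W k).
set F := (fun (kk : 'I_K) (W0 : msgs p K L) (z0 : ZT) =>
   PZ z0 / (p ^ (K * L))%:R *
   ([forall n0, ans kk n0 W0 z0 == ans k n0 W z] && (W0 kk == W k))%:R).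
have Fge0 kk W0 z0 : 0 <= F kk W0 z0.
  by rewrite /F mulr_ge0 // divr_ge0.
have pK : 0 < (p ^ (K * L))%:R :> R by rewrite ltr0n expn_gt0 prime_gt0.
move=> Heq.
apply: contraT => /negP Hn; exfalso.
have : \sum_W \sum_z F k' W z = 0.
  apply: big1 => W0 _; apply: big1 => z0 _.
  rewrite /F.
  have [Pz0|] := ltP 0 (PZ z0); last first.
    move=> le0; have -> : PZ z0 = 0 by apply/eqP; rewrite eq_le le0 PZ0.
    by rewrite !mul0r.
  case E: [forall n0, _]; last by rewrite /= mulr0.
  case: Hn; apply/existsP; exists W0; apply/existsP; exists z0.
  by rewrite Pz0 /=; move/forallP: E => /(_ n)/eqP ->; rewrite Ha.
rewrite -Heq => /psumr_eq0P => /(_ (fun W0 _ => sumr_ge0 _ (fun z0 _ => Fge0 _ _ _)) W isT).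
move/psumr_eq0P => /(_ (fun z0 _ => Fge0 _ _ _) z isT).
rewrite /F.
have -> : [forall n0, ans k n0 W z == ans k n0 W z] && (W k == W k).
  by rewrite eqxx andbT; apply/forallP => ?.
rewrite mulr1 => /eqP; rewrite mulf_eq0 invr_eq0 => /orP [] /eqP.
  by move=> E; move: Pz; rewrite E ltxx.
by move=> E; move: pK; rewrite E ltxx.
Qed.


Lemma card_supp k k0 n : #|supp k n| = #|supp k0 n|.
Proof. by apply/eqP; rewrite eqn_leq !subset_leq_card // supp_sub. Qed.

Lemma exists_z0 : exists z0, 0 < PZ z0.
Proof.
case: H => _ [PZ0 [PZ1 _]].
apply: contrapT => Hn.
have : \sum_z PZ z = 0.
  apply: big1 => z _; apply/eqP; rewrite eq_le PZ0 andbT.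
  by rewrite leNgt; apply/negP => Hz; apply: Hn; exists z.
by rewrite PZ1 => /eqP; rewrite oner_eq0.
Qed.

Definition Wk (k : 'I_K) (w : 'rV['F_p]_L) : msgs p K L :=
  [ffun j => if j == k then w else 0].

Lemma stepC k z0 : 0 < PZ z0 ->
  (#|'F_p| ^ L <= \prod_(n | k \in S n) #|supp k n|)%N.
Proof.
move=> Pz.
case: H => _ [_ [_ [loc [dec _]]]].
have [d Hd] := dec k.
pose A n : {set 'rV['F_p]_(D n)} := if k \in S n then supp k n else [set 0].
pose g (w : 'rV['F_p]_L) : {dffun forall n : 'I_N, 'rV['F_p]_(D n)} :=
  @finfun _ (fun n => 'rV['F_p]_(D n))
    (fun n => if k \in S n then ans k n (Wk k w) z0 else 0).
have ginj : injective g.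
  move=> w w' Hg.
  have E n : ans k n (Wk k w) z0 = ans k n (Wk k w') z0.
    case kS: (k \in S n).
      have Hn : g w n = g w' n by rewrite Hg.
      by move: Hn; rewrite /g !ffunE kS.
    apply: loc => j jS; rewrite !ffunE.
    case: eqP => // jk; by rewrite -jk jS in kS.
  have := Hd (Wk k w) z0 Pz; have := Hd (Wk k w') z0 Pz.
  rewrite !ffunE eqxx.
  have -> : (fun n => ans k n (Wk k w) z0) = (fun n => ans k n (Wk k w') z0).
    by apply: functional_extensionality_dep => n; apply: E.
  by move=> -> ->.
have sub : g @: [set: 'rV['F_p]_L] \subset setXn A.
  apply/fintype.subsetP => x /imsetP [w _ ->]; apply/setXnP => n.
  rewrite /A /g ffunE; case kS: (k \in S n); last by rewrite inE.
  rewrite inE; apply/existsP; exists (Wk k w); apply/existsP; exists z0.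
  by rewrite Pz eqxx.
have := subset_leq_card sub.
rewrite card_imset // cardsXn => Hle.
have E : (#|'F_p| ^ L = #|[set: 'rV['F_p]_L]|)%N.
  by rewrite cardsT card_mx mul1n.
rewrite E; refine (leq_trans Hle _).
rewrite [X in (_ <= X)%N]big_mkcond /=; apply: leq_prod => n _; rewrite /A.
by case: (k \in S n); rewrite ?cards1.
Qed.


Lemma conv_nat (k0 : 'I_K) : (0 < M)%N -> (K * L <= M * \sum_n D n)%N.
Proof.
move=> M0.
have [z0 Pz] := exists_z0.
have [Scard _] := H.
have q1 : (1 < #|'F_p|)%N by rewrite card_Fp // prime_gt1.
pose s n := #|supp k0 n|.
have h1 : (#|'F_p| ^ (L * K) <= \prod_(k : 'I_K) \prod_(n | k \in S n) s n)%N.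
  have -> : (#|'F_p| ^ (L * K) = \prod_(k : 'I_K) #|'F_p| ^ L)%N.
    by rewrite big_const_ord iter_muln_1 expnM.
  apply: leq_prod => k _.
  rewrite (eq_bigr (fun n => #|supp k n|)); first exact: stepC Pz.
  by move=> n _; rewrite /s (card_supp k0 k).
have h2 : (\prod_(k : 'I_K) \prod_(n | k \in S n) s n = \prod_n s n ^ M)%N.
  rewrite (eq_bigr (fun k : 'I_K => \prod_n (if k \in S n then s n else 1%N))); last first.
    by move=> k _; rewrite big_mkcond.
  rewrite exchange_big; apply: eq_bigr => n _.
  by rewrite -big_mkcond /= prod_nat_const Scard.
have h3 : (\prod_n s n ^ M <= \prod_n (#|'F_p| ^ D n) ^ M)%N.
  apply: leq_prod => n _; rewrite leq_exp2r //.
  apply: leq_trans (max_card _) _.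
  by rewrite card_mx mul1n.
have h4 : (\prod_n (#|'F_p| ^ D n) ^ M = #|'F_p| ^ ((\sum_n D n) * M))%N.
  rewrite big_distrl /= expn_sum; apply: eq_bigr => n _; by rewrite expnM.
have := leq_trans h1 (leq_trans (eq_leq h2) (leq_trans h3 (eq_leq h4))).
by rewrite leq_exp2l // mulnC [X in (_ <= X)%N]mulnC.
Qed.

End Conv.
Lemma sum_delta (F : pzRingType) (N c q : nat) (x : F) : (q < c)%N -> (c <= N)%N ->
  \sum_(n < N) ((n < c)%N%:R * ((q == n :> nat)%:R * x)) = x.
Proof.
move=> qc cN; have qN : (q < N)%N by apply: leq_trans qc cN.
rewrite (bigD1 (Ordinal qN)) //= eqxx qc !mul1r big1 ?addr0 // => n nq.
case: eqP => [qn|]; last by rewrite mul0r mulr0.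
have E : n = Ordinal qN by apply: val_inj.
by rewrite E eqxx in nq.
Qed.

Lemma sum_ltc (N c : nat) : (c <= N)%N -> (\sum_(n < N) (n < c)%N = c)%N.
Proof.
move=> cN; rewrite -(subnKC cN) big_split_ord /=.
rewrite [X in (_ + X)%N]big1 ?addn0; last by move=> i _; rewrite /= ltnNge leq_addr.
rewrite (eq_bigr (fun _ => 1%N)) ?sum1_card ?card_ord // => i _.
by rewrite /= ltn_ord.
Qed.

Lemma st_lt (K M n t : nat) : (t < M)%N -> (M <= K)%N -> (minn (n * M) (K - M) + t < K)%N.
Proof. lia. Qed.

Lemma in_block (K M k : nat) : (0 < M)%N -> (k < K)%N -> 
  (k - minn (k %/ M * M) (K - M) < M)%N /\ (minn (k %/ M * M) (K - M) <= k)%N.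
Proof.
move=> M0 kK; have := divn_eq k M; have := ltn_pmod k M0.
set q := (k %/ M)%N; set r := (k %% M)%N; lia.
Qed.

Lemma blk_lt (K M k : nat) : (0 < M)%N -> (k < K)%N -> (k %/ M < ceildiv K M)%N.
Proof.
move=> M0 kK; rewrite /ceildiv.
have := divn_eq k M; have := ltn_pmod k M0.
have := divn_eq (K + M).-1 M; have := ltn_pmod (K + M).-1 M0.
set q := (k %/ M)%N; set r := (k %% M)%N; set q2 := ((K + M).-1 %/ M)%N; set r2 := ((K + M).-1 %% M)%N.
move=> h1 h2 h3 h4.
case: (ltnP q q2) => // h5.
have : (q2 * M <= q * M)%N by rewrite leq_mul2r h5 orbT.
nia.
Qed.

Lemma ach (R : realType) (p K N M : nat) :
  prime p -> (0 < M)%N -> (M <= K)%N -> (ceildiv K M <= N)%N ->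
  PID_achievable p K N M ((ceildiv K M)%:R^-1 : R).
Proof.
move=> pp M0 MK cN.
set c := ceildiv K M.
pose st (n : 'I_N) := minn (n * M) (K - M).
pose S (n : 'I_N) : {set 'I_K} :=
  [set (Ordinal (st_lt n (ltn_ord t) MK)) | t : 'I_M].
pose ZT := {ffun 'I_N -> 'F_p}.
pose P (z : ZT) := (\sum_(n < N) ((n < c)%N%:R * z n) == 0).
pose cnt := #|[set z : ZT | P z]|.
pose PZ (z : ZT) : R := if P z then (cnt%:R)^-1 else 0.
pose D (n : 'I_N) : nat := (n < c)%N.
pose ans (k : 'I_K) (n : 'I_N) (W : msgs p K 1) (z : ZT) : 'rV['F_p]_(D n) :=
  const_mx (z n + (k %/ M == n :> nat)%N%:R * W k 0 0).
have kS (k : 'I_K) (n : 'I_N) : (k %/ M)%N = n -> k \in S n.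
  move=> kn; have [h1 h2] := in_block M0 (ltn_ord k).
  apply/imsetP; exists (Ordinal h1) => //; apply: val_inj => /=.
  by rewrite /st -kn subnKC.
have cnt0 : (0 < cnt)%N.
  apply/card_gt0P; exists 0; rewrite inE /P.
  by rewrite big1 // => n _; rewrite ffunE mulr0.
exists 1%N, S, ZT, PZ, D, ans.
split => //; split; last first.
  rewrite sum_ltc // div1r //.
split.
  move=> n; rewrite card_imset ?card_ord // => t t' /(congr1 val) /= E.
  by apply: val_inj; apply: addnI E.
split.
  by move=> z; rewrite /PZ; case: (P z) => //; rewrite invr_ge0 ler0n.
split.
  have -> : \sum_z PZ z = \sum_(z in [set z | P z]) (cnt%:R^-1 : R).
    by rewrite [RHS]big_mkcond; apply: eq_bigr => z _; rewrite inE.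
  by rewrite sumr_const -/cnt -[_ *+ cnt]mulr_natr mulVf // pnatr_eq0 -lt0n.
split.
  move=> k n W W' z HW; rewrite /ans.
  case: eqP => [kn|_]; last by rewrite !mul0r.
  by rewrite (HW k (kS k n kn)).
split.
  move=> k.
  exists (fun a => (const_mx (\sum_n \sum_(j < D n) a n 0 j) : 'rV['F_p]_1)).
  move=> W z; rewrite /PZ; case Pz: (P z); last by rewrite ltxx.
  move=> _; apply/rowP => j; rewrite !mxE ord1.
  rewrite (eq_bigr (fun n => (D n)%:R * (z n + (k %/ M == n :> nat)%N%:R * W k 0 0))); last first.
    move=> n _; rewrite (eq_bigr (fun _ => z n + (k %/ M == n :> nat)%N%:R * W k 0 0)).
      by rewrite sumr_const card_ord [RHS]mulr_natl.
    by move=> i _; rewrite mxE.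
  under eq_bigr do rewrite mulrDr.
  rewrite big_split /= (eqP Pz) add0r sum_delta //.
  exact: blk_lt M0 (ltn_ord k).
move=> k k' a w.
pose sw (W : msgs p K 1) : msgs p K 1 := [ffun j => W (tperm k k' j)].
pose e (n : 'I_N) : 'F_p := (k' %/ M == n :> nat)%N%:R - (k %/ M == n :> nat)%N%:R.
pose phi (x : msgs p K 1 * ZT) := (sw x.1, [ffun n => x.2 n + x.1 k' 0 0 * e n] : ZT).
have phiinj : injective phi.
  move=> [W z] [W' z'] [/= E1 E2].
  have EW : W = W'.
    apply/ffunP => j.
    have : sw W (tperm k k' j) = sw W' (tperm k k' j) by rewrite E1.
    by rewrite !ffunE tpermK.
  subst W'; congr pair; apply/ffunP => n.
  have : [ffun n => z n + W k' 0 0 * e n] n = [ffun n => z' n + W k' 0 0 * e n] n.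
    by rewrite E2.
  by rewrite !ffunE => /addIr.
have PZphi x : PZ (phi x).2 = PZ x.2.
  rewrite /PZ /P /=.
  have -> : \sum_(n < N) (n < c)%N%:R * [ffun n => x.2 n + x.1 k' 0 0 * e n] n
     = \sum_(n < N) (n < c)%N%:R * x.2 n. 
    under eq_bigr do rewrite ffunE mulrDr.
    rewrite big_split /=.
    rewrite [X in _ + X](eq_bigr (fun n : 'I_N => (n < c)%N%:R * ((k' %/ M == n :> nat)%N%:R * x.1 k' 0 0)
       - (n < c)%N%:R * ((k %/ M == n :> nat)%N%:R * x.1 k' 0 0))); last first.
      by move=> n _; rewrite /e; ring.
    rewrite sumrB !sum_delta ?subrr ?addr0 //.
      exact: blk_lt M0 (ltn_ord k).
    exact: blk_lt M0 (ltn_ord k').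
  by [].
have ansphi x n : ans k n (phi x).1 (phi x).2 = ans k' n x.1 x.2.
  rewrite /ans /= !ffunE tpermL /e; congr const_mx; ring.
rewrite !pair_bigA /= (reindex_inj phiinj) /=.
apply: eq_bigr => x _.
have := PZphi x; have := ansphi x; rewrite /phi /= => An ->.
congr (_ * _%:R); congr andb.
  by apply: eq_forallb => n; rewrite An.
by rewrite ffunE tpermL.
Qed.

Unset Implicit Arguments.
Set Strict Implicit.
Theorem theorem1 (R : realType) (p K N M : nat) :
  prime p -> (0 < M)%N -> (M <= K)%N -> (ceildiv K M <= N)%N ->
  (ceildiv K M)%:R^-1 <= PID_capacity R p K N M /\
  PID_capacity R p K N M <= M%:R / K%:R.
Proof.
move=> pp M0 MK cN.
have K0 : (0 < K)%N by apply: leq_trans MK.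
pose k0 : 'I_K := Ordinal K0.
have ub : forall r : R, PID_achievable p K N M r -> r <= M%:R / K%:R.
  move=> r [L [S [ZT [PZ [D [ans [L0 [Hs Hr]]]]]]]].
  have Hn := conv_nat pp Hs k0 M0.
  apply: le_trans Hr _.
  have s0 : (0 < \sum_n D n)%N.
    have KL : (0 < K * L)%N by rewrite muln_gt0 K0 L0.
    rewrite lt0n; apply/negP => /eqP E; move: Hn; rewrite E muln0 leqn0 => /eqP KL0.
    by rewrite KL0 in KL.
  rewrite ler_pdivrMr ?ltr0n // mulrAC ler_pdivlMr ?ltr0n // -!natrM ler_nat.
  by rewrite mulnC.
have hs : has_sup [set r : R | PID_achievable p K N M r].
  split; first by exists ((ceildiv K M)%:R^-1); exact: ach.
  by exists (M%:R / K%:R) => r; apply: ub.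
split.
  by apply: sup_upper_bound => //; exact: ach.
apply: ge_sup; first by case: hs.
by move=> r; apply: ub.
Qed.
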